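(* Let $I$ be an $\mathfrak m$-primary ideal of $R$ and let $r>0$ be such that $\mathfrak m^r\subset I$. Then for every integer $m\ge r$, $$\dim_{\mathbf k}(R/I)=\dim_{\mathbf k}(A^{(m)}/I^{(m)}).$$
   Context: $\mathbf{k}$ is algebraically closed; $X\subset\mathbb{A}^N$ is an affine variety over $\mathbf k$ (possibly reducible) whose irreducible components all have dimension $n$, containing the origin $o$; $R=\mathcal O_{X,o}$ with maximal ideal $\mathfrak m$. $A^{(m)}\subset R$ is the set of elements of $R$ which are restrictions to $X$ of polynomials in $\mathbf k[x_1,\ldots,x_N]$ of degree $\le m$, and $I^{(m)}=A^{(m)}\cap I$. *)

(* Defs.v *)
From HB Require Import structures.
From mathcomp Require Import all_boot all_order all_algebra.
From mathcomp Require Export mpoly.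
Set Implicit Arguments. Unset Strict Implicit. Unset Printing Implicit Defensive.
Import Order.TTheory GRing.Theory Num.Theory.
Local Open Scope ring_scope.

Definition point (k : closedFieldType) (N : nat) := 'I_N -> k.

Definition origin (k : closedFieldType) (N : nat) : point k N := fun _ => 0.

Definition pset (k : closedFieldType) (N : nat) := point k N -> Prop.

Definition psubset (k : closedFieldType) (N : nat) (Y Z : pset k N) :=
  forall x, Y x -> Z x.

Definition pstrict (k : closedFieldType) (N : nat) (Y Z : pset k N) :=
  psubset Y Z /\ exists x, Z x /\ ~ Y x.

Definition zclosed (k : closedFieldType) (N : nat) (Y : pset k N) :=
  exists S : {mpoly k[N]} -> Prop,
    forall x, Y x <-> (forall p, S p -> p.@[x] = 0).

(* affine variety (= algebraic subset of A^N, possibly reducible) *)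
Definition affine_variety (k : closedFieldType) (N : nat) (X : pset k N) :=
  zclosed X.

Definition zirreducible (k : closedFieldType) (N : nat) (Y : pset k N) :=
  [/\ zclosed Y, (exists x, Y x) &
      forall Y1 Y2, zclosed Y1 -> zclosed Y2 ->
        (forall x, Y x -> Y1 x \/ Y2 x) -> psubset Y Y1 \/ psubset Y Y2].

Definition irr_component (k : closedFieldType) (N : nat) (X Y : pset k N) :=
  [/\ zirreducible Y, psubset Y X &
      forall Z, zirreducible Z -> psubset Y Z -> psubset Z X -> psubset Z Y].

Definition chain_to (k : closedFieldType) (N : nat) (Y : pset k N) (d : nat) :=
  exists C : nat -> pset k N,
    [/\ forall i, (i <= d)%N -> zirreducible (C i),
        forall i, (i < d)%N -> pstrict (C i) (C i.+1) &
        forall x, C d x <-> Y x].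

Definition zdim (k : closedFieldType) (N : nat) (Y : pset k N) (n : nat) :=
  chain_to Y n /\ ~ chain_to Y n.+1.

Definition pure_dim (k : closedFieldType) (N : nat) (X : pset k N) (n : nat) :=
  forall Y, irr_component X Y -> zdim Y n.

Definition vanishes_on (k : closedFieldType) (N : nat) (X : pset k N)
  (p : {mpoly k[N]}) := forall x, X x -> p.@[x] = 0.

(* phi : k[x_1..x_N] -> R exhibits R as the localization of
   k[x_1..x_N]/I(X) at the maximal ideal of the origin, i.e. as the
   localization of k[x] at S = {g | g(o) <> 0} modulo I(X). *)
Definition is_local_ring_at_origin (k : closedFieldType) (N : nat)
  (X : pset k N) (R : comUnitRingType) (phi : {mpoly k[N]} -> R) :=
  [/\ forall g : {mpoly k[N]}, g.@[@origin k N] != 0 -> phi g \is a GRing.unit,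
      forall y : R, exists f g : {mpoly k[N]},
        g.@[@origin k N] != 0 /\ y * phi g = phi f &
      forall f : {mpoly k[N]},
        phi f = 0 <-> exists s : {mpoly k[N]},
          s.@[@origin k N] != 0 /\ vanishes_on X (s * f)].

Definition is_ideal (R : comUnitRingType) (I : R -> Prop) :=
  [/\ I 0, forall a b, I a -> I b -> I (a + b) &
      forall a b, I b -> I (a * b)].

(* maximal ideal of the local ring R: its non-units *)
Definition max_ideal (R : comUnitRingType) : R -> Prop :=
  fun x => x \isn't a GRing.unit.

Definition radical (R : comUnitRingType) (I : R -> Prop) : R -> Prop :=
  fun x => exists n : nat, I (x ^+ n).

Definition primary_to (R : comUnitRingType) (P I : R -> Prop) :=
  [/\ is_ideal I, ~ I 1,
      (forall a b, I (a * b) -> ~ I a -> exists n : nat, I (b ^+ n)) &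
      forall x, radical I x <-> P x].

Definition ideal_pow (R : comUnitRingType) (M : R -> Prop) (r : nat) : R -> Prop :=
  fun y => exists (s : nat) (a : 'I_s -> R) (x : 'I_s -> 'I_r -> R),
    (forall i j, M (x i j)) /\ y = \sum_(i < s) a i * \prod_(j < r) x i j.

(* k acts on R through the constants: c . y := phi (c%:MP) * y *)
Definition quot_dim (k : closedFieldType) (N : nat) (R : comUnitRingType)
  (phi : {mpoly k[N]} -> R) (V W : R -> Prop) (d : nat) :=
  exists b : 'I_d -> R,
    [/\ forall i, V (b i),
        (forall c : 'I_d -> k,
           W (\sum_(i < d) phi (c i)%:MP * b i) -> forall i, c i = 0) &
        (forall v, V v -> exists c : 'I_d -> k,
           W (v - \sum_(i < d) phi (c i)%:MP * b i))].

(* A^(m): restrictions of polynomials of degree <= m (msize = 1 + degree) *)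
Definition Adeg (k : closedFieldType) (N : nat) (R : comUnitRingType)
  (phi : {mpoly k[N]} -> R) (m : nat) : R -> Prop :=
  fun y => exists p : {mpoly k[N]}, (msize p <= m.+1)%N /\ y = phi p.

(* Main.v *)
Require Import Defs.
From HB Require Import structures.
From mathcomp Require Import all_boot all_order all_algebra.
From mathcomp Require Import mpoly.
From mathcomp Require Import ring.
From Stdlib Require Import Classical.
Import GRing.Theory.
Set Implicit Arguments. Unset Strict Implicit. Unset Printing Implicit Defensive.
Local Open Scope ring_scope.

Lemma nonunit_van (k : closedFieldType) (N : nat) (X : pset k N)
  (Ho : X (@origin k N))
  (R : comUnitRingType) (phi : {rmorphism {mpoly k[N]} -> R})
  (Hloc : is_local_ring_at_origin X phi) (h : {mpoly k[N]}) :
  h.@[@origin k N] = 0 -> phi h \isn't a GRing.unit.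
Proof.
move=> h0; apply/negP => /unitrP [z [zh hz]].
case: Hloc => _ Hy Hker; have [f [g [g0 e]]] := Hy z.
have : phi (h * f - g) = 0 by rewrite rmorphB rmorphM -e mulrA hz mul1r subrr.
move/Hker=> [s [s0 van]]; have := van _ Ho.
rewrite mevalM mevalB mevalM h0 mul0r sub0r mulrN => /eqP.
by rewrite oppr_eq0 mulf_eq0 (negbTE s0) (negbTE g0).
Qed.

Lemma pow_in (k : closedFieldType) (N : nat) (X : pset k N)
  (Ho : X (@origin k N))
  (R : comUnitRingType) (phi : {rmorphism {mpoly k[N]} -> R})
  (Hloc : is_local_ring_at_origin X phi) (I : R -> Prop) (r : nat)
  (HrI : forall y, ideal_pow (@max_ideal R) r y -> I y)
  (s : seq {mpoly k[N]}) (a : R) :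
  (forall h, h \in s -> h.@[@origin k N] = 0) -> (r <= size s)%N ->
  I (a * phi (\prod_(h <- s) h)).
Proof.
move=> Hs Hr; apply: HrI.
rewrite -(cat_take_drop r s) big_cat /= rmorphM.
set t := take r s; set u := drop r s.
have st : size t = r by rewrite size_takel.
exists 1%N, (fun _ => a * phi (\prod_(h <- u) h)), (fun _ j => phi (nth 0 t j)).
split.
  move=> i j; rewrite /max_ideal; apply: (nonunit_van Ho Hloc); apply: Hs.
  apply: (mem_take (n0 := r)); apply: mem_nth; by rewrite st.
rewrite big_ord1 rmorph_prod (big_nth 0) st big_mkord.
by rewrite mulrAC -mulrA.
Qed.

Lemma mono_dec (k : closedFieldType) (N : nat) (d : nat) (m : 'X_{1..N}) :
  mdeg m = d -> exists s : seq {mpoly k[N]},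
    [/\ size s = d, (forall h, h \in s -> h.@[@origin k N] = 0) &
        'X_[m] = \prod_(h <- s) h].
Proof.
elim: d m => [|d IH] m Hm.
  move/eqP: Hm; rewrite mdeg_eq0 => /eqP ->.
  by exists [::]; split => //; rewrite big_nil mpolyX0.
have [i Hi] : exists i, (0 < m i)%N.
  apply: NNPP => H; move: Hm; rewrite mdegE big1 // => i _.
  apply/eqP; rewrite -leqn0 leqNgt; apply/negP => Hi; apply: H; by exists i.
set m' := [multinom m j - (i == j) | j < N].
have em : m = (m' + U_(i))%MM.
  apply/mnmP => j; rewrite mnmDE mnmE mnm1E.
  case: (eqVneq i j) => [<-|_]; last by rewrite subn0 addn0.
  by rewrite subnK.
have [s [ss Hs es]] : exists s : seq {mpoly k[N]},
    [/\ size s = d, (forall h, h \in s -> h.@[@origin k N] = 0) &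
        'X_[m'] = \prod_(h <- s) h].
  apply: IH; move: Hm; rewrite em mdegD mdeg1 addn1; by case.
exists ('X_i :: s); split => /=; first by rewrite ss.
  move=> h; rewrite inE => /orP [/eqP ->|]; last exact: Hs.
  by rewrite mevalXU.
by rewrite em mpolyXD es big_cons mulrC.
Qed.

Definition spanI (k : closedFieldType) (N : nat) (R : comUnitRingType)
  (phi : {mpoly k[N]} -> R) (I : R -> Prop) (n : nat)
  (q : 'I_n -> {mpoly k[N]}) (y : R) :=
  exists c : 'I_n -> k, I (y - \sum_(i < n) phi (c i)%:MP * phi (q i)).

Lemma idealN (R : comUnitRingType) (I : R -> Prop) : is_ideal I ->
  forall a, I a -> I (- a).
Proof. by case=> _ _ HM a Ha; rewrite -mulN1r; apply: HM. Qed.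

Lemma span_add (k : closedFieldType) (N : nat) (R : comUnitRingType)
  (phi : {rmorphism {mpoly k[N]} -> R}) (I : R -> Prop) (HI : is_ideal I)
  n q y1 y2 : spanI phi I q y1 -> spanI phi I (n:=n) q y2 ->
  spanI phi I q (y1 + y2).
Proof.
move=> [c1 H1] [c2 H2]; exists (fun i => c1 i + c2 i).
have -> : y1 + y2 - \sum_(i < n) phi (c1 i + c2 i)%:MP * phi (q i) =
  (y1 - \sum_(i < n) phi (c1 i)%:MP * phi (q i)) +
  (y2 - \sum_(i < n) phi (c2 i)%:MP * phi (q i)).
  rewrite addrACA -opprD -big_split /=.
  congr (_ - _); apply: eq_bigr => i _.
  by rewrite mpolyCD rmorphD mulrDl.
by case: HI => _ HD _; apply: HD.
Qed.

Lemma span_I (k : closedFieldType) (N : nat) (R : comUnitRingType)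
  (phi : {rmorphism {mpoly k[N]} -> R}) (I : R -> Prop)
  n q y : I y -> spanI phi I (n:=n) q y.
Proof.
move=> Hy; exists (fun _ => 0).
rewrite big1 ?subr0 // => i _; by rewrite mpolyC0 rmorph0 mul0r.
Qed.

Lemma span_poly (k : closedFieldType) (N : nat) (X : pset k N)
  (Ho : X (@origin k N))
  (R : comUnitRingType) (phi : {rmorphism {mpoly k[N]} -> R})
  (Hloc : is_local_ring_at_origin X phi) (I : R -> Prop) (HI : is_ideal I)
  (r : nat) (HrI : forall y, ideal_pow (@max_ideal R) r y -> I y)
  (p : {mpoly k[N]}) :
  spanI phi I (fun i : 'I_#|{: 'X_{1..N < r}}| =>
                  'X_[(enum_val i : 'X_{1..N < r})]) (phi p).
Proof.
have I0 : I 0 by case: HI.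
elim/mpolyind: p => [|c m p _ _ IH]; first by rewrite rmorph0; apply: span_I.
rewrite rmorphD; apply: span_add => //.
rewrite -mul_mpolyC.
case: (ltnP (mdeg m) r) => Hm.
  pose bm : 'X_{1..N < r} := BMultinom Hm.
  exists (fun i => if i == enum_rank bm then c else 0).
  rewrite (bigD1 (enum_rank bm)) //= eqxx enum_rankK big1 => [|i /negbTE ->].
    by rewrite addr0 rmorphM subrr.
  by rewrite mpolyC0 rmorph0 mul0r.
apply: span_I.
have [s [ss Hs es]] := @mono_dec k N _ m erefl.
rewrite es rmorphM; apply: (pow_in Ho Hloc HrI) => //.
by rewrite ss.
Qed.

Lemma prod_nseq (k : closedFieldType) (N : nat) (h : {mpoly k[N]}) r :
  \prod_(x <- nseq r h) x = h ^+ r.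
Proof. by elim: r => [|r IH]; rewrite ?big_nil ?expr0 //= big_cons IH exprS. Qed.

Lemma span_all (k : closedFieldType) (N : nat) (X : pset k N)
  (Ho : X (@origin k N))
  (R : comUnitRingType) (phi : {rmorphism {mpoly k[N]} -> R})
  (Hloc : is_local_ring_at_origin X phi) (I : R -> Prop) (HI : is_ideal I)
  (r : nat) (HrI : forall y, ideal_pow (@max_ideal R) r y -> I y)
  (y : R) :
  spanI phi I (fun i : 'I_#|{: 'X_{1..N < r}}| =>
                  'X_[(enum_val i : 'X_{1..N < r})]) y.
Proof.
have [_ Hy _] := Hloc.
have [f [g [g0 e]]] := Hy y.
set c := g.@[@origin k N] in g0.
pose h := 1 - c^-1%:MP * g.
pose u := c^-1%:MP * \sum_(i < r) h ^+ i.
have h0 : h.@[@origin k N] = 0.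
  by rewrite /h mevalB mevalM !mevalC -/c mulVf // ?meval1 subrr.
have gu : g * u = 1 - h ^+ r.
  have -> : 1 - h ^+ r = - (h ^+ r - 1) by rewrite opprB.
  have e1 : h - 1 = - (c^-1%:MP * g) by rewrite /h addrAC subrr add0r.
  by rewrite subrX1 e1 mulNr opprK /u mulrA [g * _]mulrC.
have -> : y = phi (f * u) + y * phi (h ^+ r).
  rewrite rmorphM -e -mulrA -rmorphM gu rmorphB rmorph1.
  by rewrite mulrBr mulr1 subrK.
apply: span_add => //; first exact: (span_poly Ho Hloc HI HrI).
apply: span_I; rewrite -prod_nseq; apply: (pow_in Ho Hloc HrI).
  by move=> x; rewrite mem_nseq => /andP [_ /eqP ->].
by rewrite size_nseq.
Qed.

Lemma extract (k : closedFieldType) (N : nat) (R : comUnitRingType)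
  (phi : {rmorphism {mpoly k[N]} -> R}) (I : R -> Prop) (HI : is_ideal I)
  (P : {mpoly k[N]} -> Prop) :
  forall n (q : 'I_n -> {mpoly k[N]}), (forall i, P (q i)) ->
  (forall y, spanI phi I q y) ->
  exists d (q' : 'I_d -> {mpoly k[N]}), [/\ forall i, P (q' i),
    (forall c : 'I_d -> k,
       I (\sum_(i < d) phi (c i)%:MP * phi (q' i)) -> forall i, c i = 0) &
    forall y, spanI phi I q' y].
Proof.
elim=> [|n IH] q HP Hs.
  exists 0%N, q; split => // c _ i; by case: i.
case: (classic (forall c : 'I_n.+1 -> k,
       I (\sum_(i < n.+1) phi (c i)%:MP * phi (q i)) -> forall i, c i = 0))
  => [Hind|Hnot]; first by exists n.+1, q.
have [c [Hc [j Hj]]] : exists c : 'I_n.+1 -> k,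
    I (\sum_(i < n.+1) phi (c i)%:MP * phi (q i)) /\ exists j, c j <> 0.
  apply: NNPP => H; apply: Hnot => c Hc i; apply: NNPP => Hi; apply: H.
  by exists c; split => //; exists i.
apply: (IH (fun i => q (lift j i))) => [i|y]; first exact: HP.
have [c1 H1] := Hs y.
pose t := c1 j / c j.
exists (fun i => c1 (lift j i) - t * c (lift j i)).
move: H1 Hc; rewrite !(bigD1_ord j) //= => H1 Hc.
have key : phi (c1 j)%:MP * phi (q j) = phi t%:MP * (phi (c j)%:MP * phi (q j)).
  by rewrite mulrA -[phi t%:MP * _]rmorphM -mpolyCM /t divfK //; apply/eqP.
have -> : \sum_(i < n) phi (c1 (lift j i) - t * c (lift j i))%:MP * phi (q (lift j i))
   = \sum_(i < n) phi (c1 (lift j i))%:MP * phi (q (lift j i))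
     - phi t%:MP * \sum_(i < n) phi (c (lift j i))%:MP * phi (q (lift j i)).
  rewrite mulr_sumr -sumrB; apply: eq_bigr => i _.
  by rewrite mpolyCB mpolyCM rmorphB rmorphM mulrBl mulrA.
rewrite key in H1.
set S1 := \sum_(i < n) _ in H1 *.
set S := \sum_(i < n) _ in Hc *.
set A := phi (c j)%:MP * phi (q j) in H1 Hc *.
set t' := phi t%:MP in H1 *.
have -> : y - (S1 - t' * S) = (y - (t' * A + S1)) + t' * (A + S) by ring.
by case: HI => _ HD HM; apply: HD => //; apply: HM.
Qed.

Lemma msize_lin (k : closedFieldType) (N : nat) (b d : nat)
  (p : {mpoly k[N]}) (q : 'I_d -> {mpoly k[N]}) (c : 'I_d -> k) :
  (msize p <= b)%N -> (forall i, msize (q i) <= b)%N ->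
  (msize (p - \sum_(i < d) (c i)%:MP * q i) <= b)%N.
Proof.
move=> Hp Hq; apply: leq_trans (msizeD_le _ _) _; rewrite geq_max Hp msizeN /=.
apply: (big_ind (fun x : {mpoly k[N]} => msize x <= b)%N).
- by rewrite msize0.
- move=> x y Hx Hy; apply: leq_trans (msizeD_le _ _) _; by rewrite geq_max Hx Hy.
- move=> i _; rewrite mul_mpolyC; exact: leq_trans (msizeZ_le _ _) (Hq i).
Qed.

Theorem proposition2p3 (k : closedFieldType) (N n : nat) (X : pset k N)
  (HX : affine_variety X) (Hpure : pure_dim X n) (Ho : X (@origin k N))
  (R : comUnitRingType) (phi : {rmorphism {mpoly k[N]} -> R})
  (Hloc : is_local_ring_at_origin X phi)
  (I : R -> Prop) (HI : primary_to (@max_ideal R) I)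
  (r : nat) (Hr : (0 < r)%N)
  (HrI : forall y, ideal_pow (@max_ideal R) r y -> I y) :
  forall m : nat, (r <= m)%N ->
    exists d : nat,
      quot_dim phi (fun _ => True) I d /\
      quot_dim phi (Adeg phi m) (fun y => Adeg phi m y /\ I y) d.
Proof.
move=> m Hrm.
have HId : is_ideal I by case: HI.
have [d [q [HP Hind Hspan]]] :=
  @extract k N R phi I HId (fun p => (msize p <= m.+1)%N) _
    (fun i : 'I_#|{: 'X_{1..N < r}}| => 'X_[(enum_val i : 'X_{1..N < r})])
    (fun i => ltac:(rewrite /= msizeX ltnS; apply: ltnW;
                    apply: leq_trans (bmdeg _) Hrm))
    (span_all Ho Hloc HId HrI).
exists d; split.
  by exists (fun i => phi (q i)); split => // v _; apply: Hspan.
exists (fun i => phi (q i)); split.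
- by move=> i; exists (q i).
- by move=> c [_ Hc]; apply: Hind.
- move=> v [p [Hp ->]]; have [c Hc] := Hspan (phi p).
  exists c; split => //; exists (p - \sum_(i < d) (c i)%:MP * q i); split.
    exact: msize_lin.
  rewrite rmorphB rmorph_sum; congr (_ - _); apply: eq_bigr => i _.
  by rewrite rmorphM.
Qed.
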